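(* Let $p=(p_k)_{k\ge0}$ and $q=(q_k)_{k\ge0}$ be unimodal probability distributions on $\mathbb{N}_0$, and let $X\sim p$, $Y\sim q$. Then $X\le_{wd}Y$ if and only if $X\le_{rand}Y$, i.e. if and only if $\sum_{i=0}^{m}p_{[i]}\ge\sum_{i=0}^{m}q_{[i]}$ for all $m\in\mathbb{N}_0$.
   Context: For a real random variable $X$, its Lévy concentration function is $Q_X(\varepsilon)=\sup_{x_0\in\mathbb{R}}\Pr\{X\in[x_0,x_0+\varepsilon]\}$, $\varepsilon>0$. For random variables $X,Y$, write $X\le_{wd}Y$ if $Q_X(\varepsilon)\ge Q_Y(\varepsilon)$ for all $\varepsilon>0$. A distribution $p$ on the integers is unimodal if there exists an integer $M$ with $p_k\ge p_{k-1}$ for all $k\le M$ and $p_{k+1}\le p_k$ for all $k\ge M$. For a probability vector $p$, $p_{[0]}\ge p_{[1]}\ge\cdots$ denote its entries in decreasing order. $X\le_{rand}Y$ ($X$ less random than $Y$) means $q$ is majorized by $p$: $\sum_{i=0}^{m}p_{[i]}\ge\sum_{i=0}^{m}q_{[i]}$ for all $m$ (both sum to $1$). *)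

(* Defs.v *)
From Stdlib Require Import Reals.
From Coquelicot Require Import Coquelicot.
Open Scope R_scope.

Definition prob_dist (p : nat -> R) : Prop :=
  (forall k, 0 <= p k) /\ is_series p 1.

(* Unimodality of p on N_0 (p extended by 0 to the negative integers):
   there is a mode M with p nondecreasing up to M and nonincreasing from M. *)
Definition unimodal (p : nat -> R) : Prop :=
  exists M : nat,
    (forall k : nat, (0 < k)%nat -> (k <= M)%nat -> p (k - 1)%nat <= p k) /\
    (forall k : nat, (M <= k)%nat -> p (S k) <= p k).

Definition prob_interval (p : nat -> R) (a b : R) : R :=
  Series (fun k => if Rle_dec a (INR k) then
                     if Rle_dec (INR k) b then p k else 0
                   else 0).

Definition concentration (p : nat -> R) (eps : R) : Rbar :=
  Lub_Rbar (fun y => exists x0 : R, y = prob_interval p x0 (x0 + eps)).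

Definition le_wd (p q : nat -> R) : Prop :=
  forall eps : R, 0 < eps -> Rbar_le (concentration q eps) (concentration p eps).

(* r is the decreasing rearrangement (p_[0] >= p_[1] >= ...) of p:
   r is nonincreasing, r lists entries of p at distinct positions, and every
   entry of p not listed is at most every listed value. *)
Definition decr_rearr (p r : nat -> R) : Prop :=
  (forall i, r (S i) <= r i) /\
  exists sigma : nat -> nat,
    (forall i j, sigma i = sigma j -> i = j) /\
    (forall i, r i = p (sigma i)) /\
    (forall k, (forall i, sigma i <> k) -> forall i, p k <= r i).

Definition le_rand (p q : nat -> R) : Prop :=
  forall rp rq : nat -> R, decr_rearr p rp -> decr_rearr q rq ->
    forall m : nat, sum_f_R0 rq m <= sum_f_R0 rp m.

(* Main.v *)
Require Import Defs.
From Stdlib Require Import Reals Lra Lia List FinFun Classical ZArith.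
From Coquelicot Require Import Coquelicot.
Open Scope R_scope.

Definition lsum (l : list R) : R := fold_right Rplus 0 l.

Lemma lsum_app l1 l2 : lsum (l1 ++ l2) = lsum l1 + lsum l2.
Proof. induction l1; simpl; [lra|rewrite IHl1; lra]. Qed.

Fixpoint psum (f : nat -> R) (n : nat) : R :=
  match n with O => 0 | S n => f O + psum (fun i => f (S i)) n end.

Lemma psum_sum f m : psum f (S m) = sum_f_R0 f m.
Proof.
  revert f; induction m; intro f. simpl; lra.
  rewrite (decomp_sum f (S m)) by lia. simpl pred.
  rewrite <- (IHm (fun i => f (S i))). reflexivity.
Qed.

Lemma psum_nonneg f n : (forall i, 0 <= f i) -> 0 <= psum f n.
Proof. revert f; induction n; intros f H; simpl. lra.
  specialize (IHn (fun i => f (S i)) (fun i => H (S i))). specialize (H O). lra. Qed.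

Lemma decr_le0 (r : nat -> R) : (forall i, r (S i) <= r i) -> forall i, r i <= r O.
Proof. intros H i; induction i. lra. specialize (H i). lra. Qed.

Lemma lsum_ext (f g : nat -> R) l : (forall x, In x l -> f x = g x) ->
  lsum (map f l) = lsum (map g l).
Proof. induction l; intros H; simpl. reflexivity.
  rewrite H by (left; auto). rewrite IHl; auto. intros; apply H; right; auto. Qed.

Lemma top_bound : forall n (p r : nat -> R), (forall k, 0 <= p k) -> decr_rearr p r ->
  forall l, NoDup l -> (length l <= n)%nat -> lsum (map p l) <= psum r n.
Proof.
  induction n; intros p r Hp [Hdec [sigma [Hinj [Hrs Hun]]]] l Hnd Hlen.
  - destruct l; simpl in *; [lra|lia].
  - simpl.
    set (p' := fun k => if Nat.eqb k (sigma O) then 0 else p k).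
    assert (Hr0 : forall i, 0 <= r i) by (intro i; rewrite Hrs; apply Hp).
    assert (Hp' : forall k, 0 <= p' k).
    { intro k; unfold p'; destruct (Nat.eqb k (sigma O)); [lra|apply Hp]. }
    assert (HD : decr_rearr p' (fun i => r (S i))).
    { split. intro i; apply Hdec.
      exists (fun i => sigma (S i)). split. intros i j E; apply Hinj in E; lia.
      split. intro i; unfold p'. destruct (Nat.eqb_spec (sigma (S i)) (sigma O)) as [E|E].
      apply Hinj in E; discriminate. apply Hrs.
      intros k Hk i. unfold p'. destruct (Nat.eqb_spec k (sigma O)). apply Hr0.
      apply Hun. intros [|j] E. congruence. apply (Hk j); auto. }
    assert (Hext : forall l, ~ In (sigma O) l -> lsum (map p l) = lsum (map p' l)).
    { intros l0 Hn. apply lsum_ext. intros x Hx. unfold p'.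
      destruct (Nat.eqb_spec x (sigma O)); [subst; contradiction|reflexivity]. }
    destruct (classic (In (sigma O) l)) as [Hin|Hin].
    + destruct (in_split _ _ Hin) as [l1 [l2 E]]. subst l.
      destruct (NoDup_remove _ _ _ Hnd) as [Hnd' Hni].
      rewrite map_app, lsum_app. simpl.
      rewrite app_length in Hlen. simpl in Hlen.
      assert (IH := IHn p' _ Hp' HD (l1 ++ l2) Hnd' ltac:(rewrite app_length; lia)).
      rewrite <- Hext in IH by auto. rewrite map_app, lsum_app in IH.
      rewrite <- Hrs. lra.
    + destruct l as [|x l].
      * simpl. assert (0 <= psum (fun i => r (S i)) n) by (apply psum_nonneg; auto).
        specialize (Hr0 O). lra.
      * simpl. inversion Hnd; subst. simpl in Hlen.
        assert (IH := IHn p' _ Hp' HD l ltac:(auto) ltac:(lia)).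
        rewrite <- Hext in IH by (intro; apply Hin; right; auto).
        assert (p x <= r O).
        { destruct (classic (exists i, sigma i = x)) as [[i Hi]|Hn].
          - subst x. rewrite <- Hrs. apply decr_le0; auto.
          - apply Hun. intros i Hi; apply Hn; eauto. }
        lra.
Qed.
Fixpoint bsum (f : nat -> R) (n : nat) : R :=
  match n with O => 0 | S n => bsum f n + f n end.
Lemma bsum_sum f m : bsum f (S m) = sum_f_R0 f m.
Proof. induction m. simpl; lra. change (bsum f (S (S m))) with (bsum f (S m) + f (S m)).
  rewrite IHm. reflexivity. Qed.

Section Greedy.
Variables (p : nat -> R) (M : nat).
Hypothesis Hl : forall k : nat, (0 < k)%nat -> (k <= M)%nat -> p (k - 1)%nat <= p k.
Hypothesis Hr : forall k : nat, (M <= k)%nat -> p (S k) <= p k.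

Definition pickL (L R : nat) : bool :=
  match L with O => false | S L' => if Rle_dec (p R) (p L') then true else false end.

Fixpoint st (i : nat) : nat * nat :=
  match i with
  | O => (M, M)
  | S i => let s := st i in
      if pickL (fst s) (snd s) then (pred (fst s), snd s) else (fst s, S (snd s))
  end.
Definition Lf i := fst (st i).
Definition Rf i := snd (st i).
Definition sig i := if pickL (Lf i) (Rf i) then pred (Lf i) else Rf i.
Definition gv i := p (sig i).

Lemma Lf_S i : Lf (S i) = if pickL (Lf i) (Rf i) then pred (Lf i) else Lf i.
Proof. unfold Lf, Rf; simpl. destruct (pickL _ _); reflexivity. Qed.
Lemma Rf_S i : Rf (S i) = if pickL (Lf i) (Rf i) then Rf i else S (Rf i).
Proof. unfold Lf, Rf; simpl. destruct (pickL _ _); reflexivity. Qed.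

Lemma pickL_pos L R : pickL L R = true -> exists L', L = S L' /\ p R <= p L'.
Proof. destruct L; simpl. discriminate. destruct (Rle_dec _ _); [eauto|discriminate]. Qed.
Lemma pickL_neg L R : pickL L R = false -> L = O \/ exists L', L = S L' /\ p L' < p R.
Proof. destruct L; simpl. auto. destruct (Rle_dec _ _). discriminate. right; exists L; split; auto; lra. Qed.

Lemma inv i : (Lf i <= M <= Rf i)%nat /\ Rf i = (Lf i + i)%nat.
Proof.
  induction i. unfold Lf, Rf; simpl; lia.
  rewrite Lf_S, Rf_S. destruct (pickL (Lf i) (Rf i)) eqn:E.
  - destruct (pickL_pos _ _ E) as [L' [HL _]]. rewrite HL in *. simpl. lia.
  - lia.
Qed.

Lemma left_mono : forall k j, (k <= j)%nat -> (j <= M)%nat -> p k <= p j.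
Proof. intros k j H. induction H; intros. lra.
  specialize (Hl (S m) ltac:(lia) H0). replace (S m - 1)%nat with m in Hl by lia.
  specialize (IHle ltac:(lia)). lra. Qed.
Lemma right_mono : forall j k, (j <= k)%nat -> (M <= j)%nat -> p k <= p j.
Proof. intros j k H. induction H; intros. lra.
  specialize (Hr m ltac:(lia)). specialize (IHle H0). lra. Qed.

Lemma cand i k : ((k < Lf i)%nat \/ (Rf i <= k)%nat) -> p k <= gv i.
Proof.
  destruct (inv i) as [HI _]. unfold gv, sig. intros [Hk|Hk].
  - destruct (pickL (Lf i) (Rf i)) eqn:E.
    + destruct (pickL_pos _ _ E) as [L' [HL _]]. rewrite HL in *. simpl. apply left_mono; lia.
    + destruct (pickL_neg _ _ E) as [HL|[L' [HL HH]]]. lia. rewrite HL in *.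
      assert (p k <= p L') by (apply left_mono; lia). lra.
  - assert (p k <= p (Rf i)) by (apply right_mono; lia).
    destruct (pickL (Lf i) (Rf i)) eqn:E.
    + destruct (pickL_pos _ _ E) as [L' [HL HH]]. rewrite HL in *. simpl. lra.
    + auto.
Qed.

Lemma sig_out i : (sig i < Lf i)%nat \/ (Rf i <= sig i)%nat.
Proof. unfold sig. destruct (pickL (Lf i) (Rf i)) eqn:E.
  - destruct (pickL_pos _ _ E) as [L' [HL _]]. rewrite HL. simpl. lia.
  - lia. Qed.

Lemma win_mono i : (Lf (S i) <= Lf i)%nat /\ (Rf i <= Rf (S i))%nat.
Proof. rewrite Lf_S, Rf_S. destruct (pickL _ _); lia. Qed.

Lemma win_mono' i j : (i <= j)%nat -> (Lf j <= Lf i)%nat /\ (Rf i <= Rf j)%nat.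
Proof. induction 1. lia. destruct (win_mono m). lia. Qed.

Lemma sig_in i : forall j, (j < i)%nat -> (Lf i <= sig j < Rf i)%nat.
Proof.
  induction i; intros j Hj. lia.
  destruct (win_mono i) as [W1 W2].
  destruct (Nat.eq_dec j i) as [->|Hne].
  - unfold sig. rewrite Lf_S, Rf_S. destruct (inv i) as [_ HR].
    destruct (pickL (Lf i) (Rf i)) eqn:E.
    + destruct (pickL_pos _ _ E) as [L' [HL _]]. rewrite HL in *. simpl. lia.
    + lia.
  - specialize (IHi j ltac:(lia)). lia.
Qed.

Lemma sig_inj : forall i j, sig i = sig j -> i = j.
Proof.
  intros i j E. destruct (Nat.lt_trichotomy i j) as [H|[H|H]]; auto.
  - destruct (sig_in j i H). destruct (sig_out j); lia.
  - destruct (sig_in i j H). destruct (sig_out i); lia.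
Qed.

Lemma cover i : forall k, (Lf i <= k < Rf i)%nat -> exists j, (j < i)%nat /\ sig j = k.
Proof.
  induction i; intros k Hk.
  - unfold Lf, Rf in Hk; simpl in Hk; lia.
  - rewrite Lf_S, Rf_S in Hk.
    destruct (pickL (Lf i) (Rf i)) eqn:E.
    + destruct (pickL_pos _ _ E) as [L' [HL _]]. rewrite HL in *. simpl in Hk.
      destruct (Nat.eq_dec k L') as [->|Hne].
      * exists i. split. lia. unfold sig. rewrite HL, E. reflexivity.
      * destruct (IHi k ltac:(lia)) as [j [? ?]]. exists j; split; auto.
    + destruct (Nat.eq_dec k (Rf i)) as [->|Hne].
      * exists i. split. lia. unfold sig. rewrite E. reflexivity.
      * destruct (IHi k ltac:(lia)) as [j [? ?]]. exists j; split; auto.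
Qed.

Lemma greedy_rearr : decr_rearr p gv.
Proof.
  split.
  - intro i. apply cand. destruct (win_mono i). destruct (sig_out (S i)); lia.
  - exists sig. split. exact sig_inj. split. reflexivity.
    intros k Hk i. apply cand.
    destruct (Nat.lt_ge_cases k (Lf i)). auto.
    destruct (Nat.lt_ge_cases k (Rf i)). 2: auto.
    destruct (cover i k ltac:(lia)) as [j [_ Hj]]. exfalso; apply (Hk j); auto.
Qed.

Lemma greedy_win i : lsum (map p (seq (Lf i) i)) = bsum gv i.
Proof.
  induction i. reflexivity.
  change (bsum gv (S i)) with (bsum gv i + gv i). rewrite <- IHi.
  unfold gv, sig. rewrite Lf_S. destruct (inv i) as [_ HR].
  destruct (pickL (Lf i) (Rf i)) eqn:E.
  - destruct (pickL_pos _ _ E) as [L' [HL _]]. rewrite HL. simpl. lra.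
  - rewrite seq_S, map_app, lsum_app. simpl. rewrite HR. lra.
Qed.

End Greedy.

Lemma greedy_exists (p : nat -> R) : unimodal p ->
  exists g, decr_rearr p g /\ forall m, exists a, sum_f_R0 g m = lsum (map p (seq a (S m))).
Proof.
  intros [M [Hl Hr]]. exists (gv p M). split. apply greedy_rearr; auto.
  intro m. exists (Lf p M (S m)). rewrite greedy_win, bsum_sum. reflexivity.
Qed.
Lemma bsum_ext f g N : (forall k, (k < N)%nat -> f k = g k) -> bsum f N = bsum g N.
Proof. induction N; intros H; simpl. reflexivity. rewrite IHN, H; auto. Qed.

Lemma bsum_tail f N : (forall k, (N <= k)%nat -> f k = 0) -> forall d, bsum f (N + d) = bsum f N.
Proof. intros H d. induction d. rewrite Nat.add_0_r; reflexivity.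
  rewrite Nat.add_succ_r. simpl. rewrite IHd, H by lia. lra. Qed.

Definition Hw (p : nat -> R) a n k := if andb (Nat.leb a k) (Nat.ltb k (a + n)) then p k else 0.

Lemma Hw_bsum p a n : bsum (Hw p a n) (a + n) = lsum (map p (seq a n)).
Proof.
  induction n.
  - rewrite Nat.add_0_r. transitivity (bsum (fun _ => 0) a).
    apply bsum_ext. intros k Hk. unfold Hw. destruct (Nat.leb_spec a k); [lia|reflexivity].
    simpl. clear. induction a; simpl; lra.
  - rewrite Nat.add_succ_r. cbn [bsum].
    rewrite (bsum_ext (Hw p a (S n)) (Hw p a n)).
    + rewrite IHn, seq_S, map_app, lsum_app. simpl. unfold Hw.
      destruct (Nat.leb_spec a (a+n)); [|lia]. destruct (Nat.ltb_spec (a+n) (a + S n)); [|lia].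
      simpl. lra.
    + intros k Hk. unfold Hw. destruct (Nat.leb_spec a k); simpl; auto.
      destruct (Nat.ltb_spec k (a + S n)); destruct (Nat.ltb_spec k (a + n)); auto; lia.
Qed.

Lemma Hw_series p a n : is_series (Hw p a n) (lsum (map p (seq a n))).
Proof.
  assert (L : is_lim_seq (sum_n (Hw p a n)) (lsum (map p (seq a n)))).
  { apply is_lim_seq_ext_loc with (fun _ => lsum (map p (seq a n))).
    - exists (a + n)%nat. intros N HN. rewrite sum_n_Reals, <- bsum_sum.
      replace (S N) with ((a + n) + (S N - (a + n)))%nat by lia.
      rewrite bsum_tail, Hw_bsum. reflexivity.
      intros k Hk. unfold Hw. destruct (Nat.ltb_spec k (a+n)); [lia|].
      rewrite Bool.andb_false_r; reflexivity.
    - apply is_lim_seq_const. }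
  exact L.
Qed.

Lemma ceil_nat x0 : exists a : nat, x0 <= INR a /\ forall k : nat, x0 <= INR k -> (a <= k)%nat.
Proof.
  destruct (archimed (- x0)) as [H1 H2].
  set (z := up (-x0)) in *.
  destruct (Z_le_gt_dec (1 - z) 0) as [Hz|Hz].
  - exists O. simpl. assert (IZR (1 - z) <= 0) by (apply IZR_le; lia).
    rewrite minus_IZR in H. split. lra. intros; lia.
  - exists (Z.to_nat (1 - z)). rewrite INR_IZR_INZ, Z2Nat.id by lia.
    rewrite minus_IZR. split. lra.
    intros k Hk. rewrite INR_IZR_INZ in Hk.
    assert (IZR (1 - z) < IZR (Z.of_nat k + 1)).
    { rewrite minus_IZR, plus_IZR. lra. }
    apply lt_IZR in H. lia.
Qed.

Lemma conc_val (p g : nat -> R) m eps : (forall k, 0 <= p k) -> decr_rearr p g ->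
  (exists a, sum_f_R0 g m = lsum (map p (seq a (S m)))) -> INR m <= eps < INR m + 1 ->
  concentration p eps = Finite (sum_f_R0 g m).
Proof.
  intros Hp Hg [a0 Ha0] [He1 He2].
  unfold concentration. apply is_lub_Rbar_unique. split.
  - intros y [x0 ->]. simpl.
    destruct (ceil_nat x0) as [a [Ha1 Ha2]].
    apply Rle_trans with (Series (Hw p a (S m))).
    + unfold prob_interval. apply Series_le.
      2: { eexists; apply Hw_series. }
      intro k. destruct (Rle_dec x0 (INR k)) as [h1|h1].
      * destruct (Rle_dec (INR k) (x0 + eps)) as [h2|h2].
        -- unfold Hw. specialize (Ha2 k h1).
           assert (INR k < INR (a + S m)).
           { rewrite plus_INR, S_INR. lra. }
           apply INR_lt in H.
           destruct (Nat.leb_spec a k); [|lia]. destruct (Nat.ltb_spec k (a + S m)); [|lia].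
           simpl. split; [apply Hp|lra].
        -- unfold Hw. split. lra. destruct (andb _ _); [apply Hp|lra].
      * unfold Hw. split. lra. destruct (andb _ _); [apply Hp|lra].
    + rewrite (is_series_unique _ _ (Hw_series p a (S m))).
      rewrite <- psum_sum. apply top_bound; auto. apply seq_NoDup. rewrite length_seq; lia.
  - intros b Hb. apply Hb. exists (INR a0). rewrite Ha0.
    unfold prob_interval. symmetry. apply is_series_unique.
    apply is_series_ext with (Hw p a0 (S m)). 2: apply Hw_series.
    intro k. unfold Hw.
    destruct (Nat.leb_spec a0 k) as [h1|h1]; destruct (Nat.ltb_spec k (a0 + S m)) as [h2|h2]; simpl.
    + apply le_INR in h1. destruct (Rle_dec (INR a0) (INR k)); [|lra].
      assert (h3 : (k <= a0 + m)%nat) by lia. apply le_INR in h3. rewrite plus_INR in h3.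
      destruct (Rle_dec (INR k) (INR a0 + eps)); [reflexivity|lra].
    + destruct (Rle_dec (INR a0) (INR k)); [|reflexivity].
      destruct (Rle_dec (INR k) (INR a0 + eps)) as [h3|]; [|reflexivity].
      assert (INR k < INR (a0 + S m)) by (rewrite plus_INR, S_INR; lra).
      apply INR_lt in H. lia.
    + apply lt_INR in h1. destruct (Rle_dec (INR a0) (INR k)); [lra|reflexivity].
    + apply lt_INR in h1. destruct (Rle_dec (INR a0) (INR k)); [lra|reflexivity].
Qed.

Lemma lsum_seq f m : lsum (map f (seq 0 (S m))) = sum_f_R0 f m.
Proof. induction m. simpl; lra. rewrite seq_S, map_app, lsum_app, IHm. simpl. lra. Qed.

Lemma rearr_sum (p r : nat -> R) m : decr_rearr p r ->
  exists l, NoDup l /\ length l = S m /\ sum_f_R0 r m = lsum (map p l).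
Proof.
  intros [_ [sigma [Hinj [Hrs _]]]]. exists (map sigma (seq 0 (S m))).
  split. apply Injective_map_NoDup. exact Hinj. apply seq_NoDup.
  split. rewrite length_map, length_seq; reflexivity.
  rewrite <- lsum_seq, map_map. f_equal. apply map_ext. auto.
Qed.

Theorem proposition5p1 (p q : nat -> R) :
  prob_dist p -> prob_dist q -> unimodal p -> unimodal q ->
  (le_wd p q <-> le_rand p q).
Proof.
  intros [Hp _] [Hq _] Up Uq.
  destruct (greedy_exists p Up) as [gp [Gp Wp]].
  destruct (greedy_exists q Uq) as [gq [Gq Wq]].
  split.
  - intros Hwd rp rq Rp Rq m.
    assert (E : INR m <= INR m + /2 < INR m + 1) by lra.
    assert (Hpos : 0 < INR m + /2) by (pose proof (pos_INR m); lra).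
    specialize (Hwd _ Hpos).
    rewrite (conc_val p gp m _ Hp Gp (Wp m) E), (conc_val q gq m _ Hq Gq (Wq m) E) in Hwd.
    simpl in Hwd.
    destruct (rearr_sum q rq m Rq) as [l1 [N1 [L1 E1]]].
    destruct (Wp m) as [a Ha].
    assert (A1 : lsum (map q l1) <= psum gq (S m)) by (apply top_bound; auto; lia).
    assert (A2 : lsum (map p (seq a (S m))) <= psum rp (S m)).
    { apply top_bound; auto. apply seq_NoDup. rewrite length_seq; lia. }
    rewrite psum_sum in A1, A2. lra.
  - intros Hr eps Heps.
    destruct (nfloor_ex eps ltac:(lra)) as [m Hm].
    rewrite (conc_val p gp m _ Hp Gp (Wp m) Hm), (conc_val q gq m _ Hq Gq (Wq m) Hm).
    simpl. apply Hr; auto.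
Qed.
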